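(* Let $d\ge1$, $I=[0,1]$, and for $v\in\{0,2\}^d$ let $h_v(\mathbf{x})=(\mathbf{x}+v)/3$; for a word $w=(v_1,\dots,v_n)\in(\{0,2\}^d)^n$ write $h_w=h_{v_1}\circ\cdots\circ h_{v_n}$. There exists a constant $C_d$ depending only on $d$ such that for every affine hyperplane $\mathcal{L}\subseteq\mathbb{R}^d$ and every $n\in\mathbb{N}$, with $\varepsilon=3^{-n}$, the open $\varepsilon$-neighborhood $\mathcal{L}^{(\varepsilon)}$ intersected with $\mathcal{C}^d$ can be covered by at most $C_d2^{(d-1)n}$ cubes of the form $h_w(I^d)$ with $w\in(\{0,2\}^d)^n$.
   Context: $\mathcal{C}$ is the middle-thirds Cantor set; $\mathcal{C}^d$ is the limit set of the maps $h_v$, $v\in\{0,2\}^d$. $\mathcal{L}^{(\varepsilon)}$ denotes the open Euclidean $\varepsilon$-neighborhood of $\mathcal{L}$. *)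

(* Defs.v *)
From HB Require Import structures.
From mathcomp Require Import all_boot all_order all_algebra.
From mathcomp Require Import reals Rstruct.
Set Implicit Arguments. Unset Strict Implicit. Unset Printing Implicit Defensive.
Import Order.TTheory GRing.Theory Num.Theory.
Local Open Scope ring_scope.

Notation RR := Rdefinitions.R.

Definition point (d : nat) := 'I_d -> RR.

(* A digit vector v in {0,2}^d, encoded by a boolean per coordinate:
   true <-> coordinate 2, false <-> coordinate 0. *)
Definition digit (d : nat) := {ffun 'I_d -> bool}.

Definition digit_val d (v : digit d) (i : 'I_d) : RR := if v i then 2 else 0.

Definition h d (v : digit d) (x : point d) : point d :=
  fun i => (x i + digit_val v i) / 3.

Definition hw d (w : seq (digit d)) (x : point d) : point d :=
  foldr (@h d) x w.

Definition unit_cube d (y : point d) : Prop := forall i, 0 <= y i <= 1.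

Definition in_cube d (w : seq (digit d)) (x : point d) : Prop :=
  exists y, unit_cube y /\ x = hw w y.

(* C^d: the limit set (attractor) of the IFS {h_v : v in {0,2}^d},
   i.e. the intersection over n of the unions of the level-n cubes. *)
Definition cantor_d d (x : point d) : Prop :=
  forall n : nat, exists w : n.-tuple (digit d), in_cube (tval w) x.

Definition dist d (x y : point d) : RR :=
  Num.sqrt (\sum_(i < d) (x i - y i) ^+ 2).

Definition hyperplane d (a : point d) (b : RR) (x : point d) : Prop :=
  \sum_(i < d) a i * x i = b.

Definition nbhd d (L : point d -> Prop) (eps : RR) (x : point d) : Prop :=
  exists y, L y /\ dist x y < eps.

(* Main.v *)
Require Import Defs.
From HB Require Import structures.
From mathcomp Require Import all_boot all_order all_algebra.
From mathcomp Require Import reals Rstruct.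
From mathcomp Require Import ring lra zify.
Import Order.TTheory GRing.Theory Num.Theory.
Set Implicit Arguments. Unset Strict Implicit.
Local Open Scope ring_scope.

Fixpoint enc (s : seq bool) : nat :=
  if s is b :: s' then ((if b then 2 else 0) * 3 ^ size s' + enc s')%N else 0%N.

Lemma enc_lt s : (enc s < 3 ^ size s)%N.
Proof. elim: s => [|b s IH] //=; rewrite expnS; case: b; lia. Qed.

Lemma enc_inj s t : size s = size t -> enc s = enc t -> s = t.
Proof.
elim: s t => [|b s IH] [|c t] //= [Hs] He.
have h1 := enc_lt s; have h2 := enc_lt t; rewrite -Hs in h2.
rewrite -Hs in He.
have Hbc : b = c by move: He; case: b; case: c => //= ?; exfalso; lia.
subst c; congr (_ :: _); apply: IH => //; move: He; case: b => /=; lia.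
Qed.

Definition col (d : nat) (i : ordinal d) (w : seq (digit d)) : seq bool := map (fun v : digit d => fun_of_fin v i) w.
Definition E d (i : 'I_d) (w : seq (digit d)) := enc (col i w).

Lemma hw_coord d (w : seq (digit d)) y i :
  hw w y i = (y i + (E i w)%:R) / 3 ^+ size w.
Proof.
elim: w => [|v w IH] /=; first by rewrite /E /= expr0 divr1 addr0.
rewrite /h IH /digit_val /E /= size_map natrD natrM natrX exprS.
have H3 : (3 : RR) ^+ size w != 0 by apply: expf_neq0; rewrite pnatr_eq0.
move: H3; move: (3 ^+ size w) => t Ht.
case: (v i) => /=; rewrite ?mul0r ?add0r ?addr0; field; rewrite Ht /=; lra.
Qed.

Lemma argmax d (a : point d) (ia : 'I_d) : exists i0, forall i, `|a i| <= `|a i0|.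
Proof.
case: (@arg_maxP _ _ 'I_d ia xpredT (fun i => `|a i|) isT) => i0 _ H.
by exists i0 => i; apply: H.
Qed.

Lemma coord_le_dist d (x z : point d) i : `|x i - z i| <= dist x z.
Proof.
rewrite /dist -(sqrtr_sqr (x i - z i)) ler_sqrt ?sumr_ge0 // => [|j _]; last exact: sqr_ge0.
by rewrite (bigD1 i) //= lerDl sumr_ge0 // => j _; exact: sqr_ge0.
Qed.

Lemma cols_inj d (s1 s2 : seq (digit d)) :
  size s1 = size s2 -> (forall i, col i s1 = col i s2) -> s1 = s2.
Proof.
elim: s1 s2 => [|v s IH] [|v' s'] //= [Hs] Hc.
have Hv : v = v' by apply/ffunP => i; have := Hc i; rewrite /col /= => -[].
by rewrite Hv (IH s') // => i; have := Hc i; rewrite /col /= => -[] _ ->.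
Qed.

Lemma col_lift d' (i0 : 'I_d'.+1) j (s : seq (digit d'.+1)) :
  map (fun f : {ffun 'I_d' -> bool} => f j)
    (map (fun v : digit d'.+1 => [ffun j => v (lift i0 j)]) s) = col (lift i0 j) s.
Proof. by elim: s => //= v s ->; rewrite ffunE. Qed.

Lemma modeq_close (e1 e2 k : nat) : (e1 <= e2 + k)%N -> (e2 <= e1 + k)%N ->
  (e1 %% k.+1)%N = (e2 %% k.+1)%N -> e1 = e2.
Proof.
move=> h1 h2 hm.
have := divn_eq e1 k.+1; have := divn_eq e2 k.+1; rewrite hm.
move: (e1 %/ k.+1)%N (e2 %/ k.+1)%N (e2 %% k.+1)%N => q1 q2 r E2 E1.
case: (ltngtP q1 q2) => Hq; last by rewrite E1 E2 Hq.
- have : (q1.+1 * k.+1 <= q2 * k.+1)%N by rewrite leq_mul2r Hq orbT.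
  lia.
- have : (q2.+1 * k.+1 <= q1 * k.+1)%N by rewrite leq_mul2r Hq orbT.
  lia.
Qed.

Unset Implicit Arguments.
Theorem mainTheorem6 :
  forall d : nat, (1 <= d)%N ->
  exists C : RR,
    forall (a : point d) (b : RR), (exists i, a i <> 0) ->
    forall n : nat,
      exists W : {set n.-tuple (digit d)},
        (#|W|%:R <= C * 2 ^+ ((d - 1) * n))%R /\
        forall x : point d,
          cantor_d x -> nbhd (hyperplane a b) (3 ^- n) x ->
          exists2 w, w \in W & in_cube (tval w) x.
Proof.
move=> [|d'] // _.
exists ((4 * d'.+1).+1)%:R.
move=> a b [ia Ha] n.
have [i0 Hi0] := argmax a ia.
set M := `|a i0|.
have M0 : 0 < M.
  apply: (lt_le_trans _ (Hi0 ia)); rewrite normr_gt0; exact/eqP.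
set N := (3:RR) ^+ n.
have N0 : 0 < N by rewrite /N exprn_gt0.
pose P (w : n.-tuple (digit d'.+1)) :=
  `|\sum_i a i * (E i w)%:R - N * b| <= 2 * (d'.+1)%:R * M.
exists [set w | P w]; split.
- pose g (w : n.-tuple (digit d'.+1)) :=
    (map_tuple (fun v : digit d'.+1 => [ffun j => v (lift i0 j)]) w,
     (inord ((E i0 w) %% (4 * d'.+1).+1)%N : 'I_(4 * d'.+1).+1)).
  have injg : {in [set w | P w] &, injective g}.
    move=> w1 w2; rewrite !inE /P => P1 P2 [Hu Hm].
    have Hc : forall i, i != i0 -> col i w1 = col i w2.
      move=> i; case: (unliftP i0 i) => [j ->|->]; last by rewrite eqxx.
      move=> _; rewrite -!col_lift.
      by rewrite Hu.
    have Hs : \sum_(i | i != i0) a i * (E i w1)%:R = \sum_(i | i != i0) a i * (E i w2)%:R.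
      by apply: eq_bigr => i /Hc; rewrite /E => ->.
    rewrite (bigD1 i0) //= Hs in P1; rewrite (bigD1 i0) //= in P2.
    move: P1 P2; set S := \sum_(i | i != i0) _; set e1 := E i0 w1; set e2 := E i0 w2.
    move=> P1 P2.
    have Ht : `|a i0 * (e1%:R - e2%:R)| <= 4 * (d'.+1)%:R * M.
      have -> : a i0 * (e1%:R - e2%:R) = (a i0 * e1%:R + S - N * b) - (a i0 * e2%:R + S - N * b) by ring.
      apply: le_trans (ler_normB _ _) _; lra.
    move: Ht; rewrite normrM -/M mulrC ler_pM2r // ler_norml => /andP[t1 t2].
    have h1 : (e1 <= e2 + 4 * d'.+1)%N.
      by rewrite -(ler_nat RR) natrD natrM; lra.
    have h2 : (e2 <= e1 + 4 * d'.+1)%N.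
      by rewrite -(ler_nat RR) natrD natrM; lra.
    have hm : (e1 %% (4 * d'.+1).+1)%N = (e2 %% (4 * d'.+1).+1)%N.
      by move: Hm => /(congr1 val); rewrite /= !inordK // ltn_pmod.
    have he := modeq_close h1 h2 hm.
    have Hc0 : col i0 w1 = col i0 w2 by apply: enc_inj; rewrite // /col !size_map !size_tuple.
    apply: val_inj; apply: cols_inj; first by rewrite !size_tuple.
    by move=> i; case: (eqVneq i i0) => [->|/Hc].
  rewrite -(card_in_imset injg).
  apply: le_trans (_ : (#|{: n.-tuple {ffun 'I_d' -> bool} * 'I_(4 * d'.+1).+1}|)%:R <= _).
    by rewrite ler_nat; apply: max_card.
  rewrite card_prod card_tuple card_ffun card_bool card_ord subn1 /= -expnM natrM natrX mulrC.
  by rewrite card_ord.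
- move=> x Hc [z [Hz Hd]].
  have [w [y [Hy Hx]]] := Hc n.
  exists w; last by exists y.
  rewrite inE /P.
  have -> : \sum_i a i * (E i w)%:R - N * b
            = \sum_i a i * ((E i w)%:R - N * z i).
    rewrite -Hz /hyperplane mulr_sumr -sumrB; apply: eq_bigr => i _; ring.
  apply: (le_trans (ler_norm_sum _ _ _)).
  apply: le_trans (_ : \sum_(i < d'.+1) M * 2 <= _).
    apply: ler_sum => i _; rewrite normrM.
    apply: ler_pM; rewrite ?normr_ge0 //.
    have Hxi : x i = (y i + (E i w)%:R) / N by rewrite Hx hw_coord size_tuple.
    have Hu : `|x i - z i| < N^-1 by apply: le_lt_trans (coord_le_dist _ _ _) Hd.
    have HNu : `|N * (x i - z i)| <= 1.
      rewrite normrM gtr0_norm // -(mulfV (lt0r_neq0 N0)) ler_pM2l //.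
      exact: ltW.
    have -> : (E i w)%:R - N * z i = N * (x i - z i) - y i.
      rewrite Hxi; field; exact: lt0r_neq0.
    move: HNu; rewrite !ler_norml => /andP[h1 h2]; have /andP[hy1 hy2] := Hy i.
    by apply/andP; split; lra.
  rewrite sumr_const card_ord -mulr_natr le_eqVlt; apply/orP; left; apply/eqP; ring.
Qed.
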